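(* Let $\mathcal{D}$ be a finite set of disks in the plane, and let $(C_1,C_2)$ be a pair of congruent disks of smallest possible common radius such that every $D\in\mathcal{D}$ satisfies $D\subseteq C_1$ or $D\subseteq C_2$. Assume the centers of $C_1$ and $C_2$ are distinct and let $\ell$ be the perpendicular bisector of the segment connecting them. Then for $i\in\{1,2\}$, $D\subseteq C_i$ for every $D\in\mathcal{D}$ whose center lies on the same (closed) side of $\ell$ as the center of $C_i$.
   Context: Disks are closed disks in the plane. The paper assumes throughout that no disk of $\mathcal{D}$ contains another disk of $\mathcal{D}$. *)

(* Defs.v *)
From HB Require Import structures.
From mathcomp Require Import all_boot all_order all_algebra.
From mathcomp Require Import reals.
Set Implicit Arguments. Unset Strict Implicit. Unset Printing Implicit Defensive.
Import Order.TTheory GRing.Theory Num.Theory.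
Local Open Scope ring_scope.

Definition point (R : realType) := (R * R)%type.

Definition dist (R : realType) (p q : point R) : R :=
  Num.sqrt ((p.1 - q.1) ^+ 2 + (p.2 - q.2) ^+ 2).

Definition disk (R : realType) := (point R * R)%type.
Definition center (R : realType) (D : disk R) : point R := D.1.
Definition radius (R : realType) (D : disk R) : R := D.2.

Definition in_disk (R : realType) (D : disk R) (p : point R) : Prop :=
  dist p (center D) <= radius D.

Definition disk_sub (R : realType) (D E : disk R) : Prop :=
  forall p : point R, in_disk D p -> in_disk E p.

Definition covering_pair (R : realType) (s : seq (disk R)) (C1 C2 : disk R) : Prop :=
  0 <= radius C1 /\ radius C1 = radius C2 /\
  forall D, D \in s -> disk_sub D C1 \/ disk_sub D C2.

Definition optimal_covering_pair (R : realType) (s : seq (disk R)) (C1 C2 : disk R) : Prop :=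
  covering_pair s C1 C2 /\
  forall C1' C2', covering_pair s C1' C2' -> radius C1 <= radius C1'.

Definition disk_family (R : realType) (s : seq (disk R)) : Prop :=
  (forall D, D \in s -> 0 < radius D) /\
  (forall D E, D \in s -> E \in s -> D != E -> ~ disk_sub D E).

(* p lies on the closed side of the perpendicular bisector of segment [a b]
   that contains a. *)
Definition on_side_of_bisector (R : realType) (a b p : point R) : Prop :=
  dist p a <= dist p b.

(* Main.v *)
Require Import Defs.
From HB Require Import structures.
From mathcomp Require Import all_boot all_order all_algebra.
From mathcomp Require Import reals ring lra.
Import Order.TTheory GRing.Theory Num.Theory.
Local Open Scope ring_scope.

Lemma sq_nonneg_sum (R : realType) (a b : R) : 0 <= a ^+ 2 + b ^+ 2.
Proof. by rewrite addr_ge0 // sqr_ge0. Qed.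

Lemma tri_core (R : realType) (a1 a2 b1 b2 : R) :
  Num.sqrt ((a1 + b1) ^+ 2 + (a2 + b2) ^+ 2) <=
  Num.sqrt (a1 ^+ 2 + a2 ^+ 2) + Num.sqrt (b1 ^+ 2 + b2 ^+ 2).
Proof.
set S1 := Num.sqrt _; set S2 := Num.sqrt _; set S3 := Num.sqrt _.
have h1 : S1 ^+ 2 = (a1 + b1) ^+ 2 + (a2 + b2) ^+ 2 by rewrite sqr_sqrtr // sq_nonneg_sum.
have h2 : S2 ^+ 2 = a1 ^+ 2 + a2 ^+ 2 by rewrite sqr_sqrtr // sq_nonneg_sum.
have h3 : S3 ^+ 2 = b1 ^+ 2 + b2 ^+ 2 by rewrite sqr_sqrtr // sq_nonneg_sum.
have p1 : 0 <= S1 by rewrite sqrtr_ge0.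
have p2 : 0 <= S2 by rewrite sqrtr_ge0.
have p3 : 0 <= S3 by rewrite sqrtr_ge0.
have lag : (a1 * b1 + a2 * b2) ^+ 2 <= (S2 * S3) ^+ 2.
  rewrite exprMn h2 h3. have := sqr_ge0 (a1 * b2 - a2 * b1). nra.
have cs : a1 * b1 + a2 * b2 <= S2 * S3.
  have p23 : 0 <= S2 * S3 by rewrite mulr_ge0.
  nra.
nra.
Qed.

Lemma dist_tri (R : realType) (p m q : point R) :
  dist p q <= dist p m + dist m q.
Proof.
rewrite /dist.
have -> : p.1 - q.1 = (p.1 - m.1) + (m.1 - q.1) by ring.
have -> : p.2 - q.2 = (p.2 - m.2) + (m.2 - q.2) by ring.
exact: tri_core.
Qed.

Lemma sqrt_eq (R : realType) (X y : R) : 0 <= y -> X = y ^+ 2 -> Num.sqrt X = y.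
Proof. by move=> hy ->; rewrite sqrtr_sqr ger0_norm. Qed.

Lemma sub_incl (R : realType) (D C : disk R) :
  0 <= radius D -> disk_sub D C -> dist (center D) (center C) + radius D <= radius C.
Proof.
case: D => [[d1 d2] rho]; case: C => [[c1 c2] r] /= hr hs.
rewrite /center /radius /=.
set t := dist _ _.
have ht0 : 0 <= t by rewrite sqrtr_ge0.
have ht2 : t ^+ 2 = (d1 - c1) ^+ 2 + (d2 - c2) ^+ 2.
  by rewrite sqr_sqrtr // sq_nonneg_sum.
have [t0|tpos] := eqVneq t 0.
  have e : (d1 - c1) ^+ 2 + (d2 - c2) ^+ 2 == 0 by rewrite -ht2 t0 expr0n.
  rewrite paddr_eq0 ?sqr_ge0 // !sqrf_eq0 in e.
  case/andP: e => /eqP u1 /eqP u2.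
  have := hs (d1 + rho, d2).
  rewrite /in_disk /center /radius /dist /=.
  have -> : d1 + rho - d1 = rho by ring.
  have -> : d2 - d2 = 0 by ring.
  have -> : d1 + rho - c1 = rho by lra.
  rewrite u2 t0 (@sqrt_eq _ _ (rho)) //; last by ring.
  rewrite add0r; apply; exact: lexx.
have tp : 0 < t by rewrite lt_neqAle eq_sym tpos ht0.
set k := rho / t.
have hk : 0 <= k by rewrite divr_ge0.
have kt : k * t = rho by rewrite /k divfK.
have := hs (d1 + k * (d1 - c1), d2 + k * (d2 - c2)).
rewrite /in_disk /center /radius /dist /=.
have -> : d1 + k * (d1 - c1) - d1 = k * (d1 - c1) by ring.
have -> : d2 + k * (d2 - c2) - d2 = k * (d2 - c2) by ring.
have -> : d1 + k * (d1 - c1) - c1 = (1 + k) * (d1 - c1) by ring.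
have -> : d2 + k * (d2 - c2) - c2 = (1 + k) * (d2 - c2) by ring.
rewrite (@sqrt_eq _ _ (rho)); last first.
- by rewrite -kt !exprMn -mulrDr ht2.
- exact: hr.
rewrite (@sqrt_eq _ _ (t + rho)); last first.
- by rewrite -kt (_ : t + k * t = (1 + k) * t); [rewrite !exprMn -mulrDr ht2| ring].
- by rewrite addr_ge0.
by apply; rewrite lexx.
Qed.

Lemma incl_sub (R : realType) (D C : disk R) :
  dist (center D) (center C) + radius D <= radius C -> disk_sub D C.
Proof.
move=> h p hp; rewrite /in_disk.
have := @dist_tri _ p (center D) (center C).
rewrite /in_disk in hp. lra.
Qed.

Theorem mainTheorem14 (R : realType) (s : seq (disk R)) (C1 C2 : disk R) :
  disk_family s ->
  optimal_covering_pair s C1 C2 ->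
  center C1 != center C2 ->
  forall D, D \in s ->
    (on_side_of_bisector (center C1) (center C2) (center D) -> disk_sub D C1) /\
    (on_side_of_bisector (center C2) (center C1) (center D) -> disk_sub D C2).
Proof.
move=> [hpos _] [[h0 [hr hcov]] _] _ D hD.
have hrho : 0 <= radius D by apply: ltW; apply: hpos.
rewrite /on_side_of_bisector.
split => hside; apply: incl_sub.
- case: (hcov D hD) => hs; first exact: sub_incl hrho hs.
  have := @sub_incl _ _ _ hrho hs; lra.
- case: (hcov D hD) => hs; last exact: sub_incl hrho hs.
  have := @sub_incl _ _ _ hrho hs; lra.
Qed.
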